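(* Let $(\mathbf{X}^0,\mathbf{p})$ be a pEF1 $\{1,k\}$-payment equilibrium that is not $(2-1/k)$-pEFX. Then there exists an integer $z<k$ such that $p(X^0_j)\in\{z,z+1\}$ for every agent $j\in N_L$, and $p(X^0_i)\in[k,k+z]$ for every agent $i\in N_H$.
   Context: Fix $k>1$. Agents $N$, chores $M$, additive costs $c_i(e)\in\{1,k\}$. An allocation partitions $M$ into bundles. A payment vector assigns $p(e)>0$, $p(X)=\sum_{e\in X}p(e)$; $\alpha_{i,e}=c_i(e)/p(e)$, $\alpha_i=\min_e\alpha_{i,e}$, $\mathsf{MPB}_i=\{e:\alpha_{i,e}=\alpha_i\}$; $(\mathbf{X},\mathbf{p})$ is a $\{1,k\}$-payment equilibrium if $X_i\subseteq\mathsf{MPB}_i$ for all $i$ and $p(e)\in\{1,k\}$ for all $e$. It is pEF1 if for all $i,j$, $X_i=\emptyset$ or some $e\in X_i$ has $p(X_i\setminus\{e\})\le p(X_j)$; it is $\beta$-pEFX if for all $i,j$, $X_i=\emptyset$ or $p(X_i\setminus\{e\})\le\beta\,p(X_j)$ for all $e\in X_i$. $L=\{e:p(e)=1\}$, $H=\{e:p(e)=k\}$, $N_L=\{i:X^0_i\subseteq L\}$, $N_H=\{i:|X^0_i\cap H|\ge1\}$. *)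

(* Defs.v *)
From mathcomp Require Import all_boot all_order all_algebra.
Set Implicit Arguments. Unset Strict Implicit. Unset Printing Implicit Defensive.
Import Order.TTheory GRing.Theory Num.Theory.
Local Open Scope ring_scope.

Section Defs.
Variables (R : realFieldType) (N M : finType).

Definition is_allocation (X : N -> {set M}) : Prop :=
  (forall i j, i != j -> [disjoint X i & X j]) /\
  (forall e : M, exists i, e \in X i).

Definition pay (p : M -> R) (S : {set M}) : R := \sum_(e in S) p e.

Definition alpha (c : N -> M -> R) (p : M -> R) (i : N) (e : M) : R := c i e / p e.

Definition in_MPB (c : N -> M -> R) (p : M -> R) (i : N) (e : M) : Prop :=
  forall e' : M, alpha c p i e <= alpha c p i e'.

Definition payment_equilibrium_1k (k : R) (c : N -> M -> R)
    (X : N -> {set M}) (p : M -> R) : Prop :=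
  (forall e, 0 < p e) /\
  (forall i e, e \in X i -> in_MPB c p i e) /\
  (forall e, p e = 1 \/ p e = k).

Definition pEF1 (X : N -> {set M}) (p : M -> R) : Prop :=
  forall i j, X i = set0 \/ exists2 e, e \in X i & pay p (X i :\ e) <= pay p (X j).

Definition pEFX (beta : R) (X : N -> {set M}) (p : M -> R) : Prop :=
  forall i j, X i = set0 \/
    forall e, e \in X i -> pay p (X i :\ e) <= beta * pay p (X j).

Definition Lset (p : M -> R) : {set M} := [set e | p e == 1].
Definition Hset (k : R) (p : M -> R) : {set M} := [set e | p e == k].
Definition N_L (X : N -> {set M}) (p : M -> R) : {set N} :=
  [set i | X i \subset Lset p].
Definition N_H (k : R) (X : N -> {set M}) (p : M -> R) : {set N} :=
  [set i | 1 <= #|X i :&: Hset k p|]%N.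
End Defs.

(* Main.v *)
Require Import Defs.
From mathcomp Require Import all_boot all_order all_algebra.
From mathcomp Require Import ring lra.
Set Implicit Arguments. Unset Strict Implicit.
Import Order.TTheory GRing.Theory Num.Theory.
Local Open Scope ring_scope.

Section Aux.
Variables (R : realFieldType) (M : finType) (p : M -> R).
Hypothesis pos : forall e, 0 < p e.

Lemma pay_ge0 (S : {set M}) : 0 <= pay p S.
Proof. by apply: sumr_ge0 => e _; apply: ltW. Qed.

Lemma pay_D1 (S : {set M}) e : e \in S -> pay p S = p e + pay p (S :\ e).
Proof. by move=> eS; rewrite /pay (big_setD1 e eS). Qed.

Lemma pay_ge_elem (S : {set M}) e : e \in S -> p e <= pay p S.
Proof. by move=> eS; rewrite (pay_D1 eS) lerDl pay_ge0. Qed.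

Lemma pay_L (S : {set M}) : (forall e, e \in S -> p e = 1) -> pay p S = #|S|%:R.
Proof.
move=> H; rewrite /pay (eq_bigr (fun _ => 1)); last by move=> e /H.
by rewrite sumr_const.
Qed.
End Aux.

Theorem corollary2 (R : realFieldType) (k : R) (N M : finType)
    (c : N -> M -> R) (X : N -> {set M}) (p : M -> R) :
  1 < k ->
  (forall i e, c i e = 1 \/ c i e = k) ->
  is_allocation X ->
  payment_equilibrium_1k k c X p ->
  pEF1 X p ->
  ~ pEFX (2 - 1 / k) X p ->
  exists z : int,
    z%:~R < k /\
    (forall j, j \in N_L X p -> pay p (X j) = z%:~R \/ pay p (X j) = z%:~R + 1) /\
    (forall i, i \in N_H k X p -> k <= pay p (X i) <= k + z%:~R).
Proof.
move=> k1 _ _ [pos [_ p1k]] ef1 nefx.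
have k0 : 0 < k by apply: lt_trans k1.
have pk e : p e <= k by case: (p1k e) => ->; lra.
have [j0 Hj0] : exists j, pay p (X j) < k.
  case: (pickP (fun j => pay p (X j) < k)) => [j Hj|nex]; first by exists j.
  exfalso; apply: nefx => i j.
  have kPj : k <= pay p (X j) by rewrite leNgt nex.
  case: (ef1 i j) => [->|[e' e'X He']]; first by left.
  right => e eX.
  have Pj0 : 0 <= pay p (X j) by apply: pay_ge0.
  have h1 : pay p (X i) - p e' <= pay p (X j).
    by rewrite (pay_D1 p e'X) addrC addKr.
  move: (pay_D1 p eX) => hD.
  have t1 : 1 / k < 1 by rewrite ltr_pdivrMr // mul1r.
  have t0 : 0 < 1 / k by rewrite divr_gt0.
  have E : (2 - 1/k) * pay p (X j) = pay p (X j) + (1 - 1/k) * pay p (X j).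
    by rewrite mulrBl mulrDl mul1r mulrBl mul1r; ring.
  rewrite E.
  case: (p1k e) => pe.
  - have : (1 - 1/k) * k <= (1 - 1/k) * pay p (X j).
      by apply: ler_wpM2l => //; rewrite subr_ge0 ltW.
    have Ek : (1 - 1/k) * k = k - 1.
      by rewrite mulrBl mul1r mul1r mulVf // gt_eqF.
    rewrite Ek => h2.
    have := pk e'. move: h2 h1 hD pe. set y := (1 - 1/k) * _. set P := pay p (X j). lra.
  - have h5 : 0 <= (1 - 1/k) * pay p (X j).
      by apply: mulr_ge0 => //; rewrite subr_ge0 ltW.
    have := pk e'. move: h5 h1 hD pe. set y := (1 - 1/k) * _. set P := pay p (X j). lra.
case: (@arg_minP _ R N j0 xpredT (fun a => pay p (X a)) isT) => a _ Ha.
have Ha' b : pay p (X a) <= pay p (X b) by apply: Ha.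
have PaL : forall e, e \in X a -> p e = 1.
  move=> e eX; case: (p1k e) => // pe; exfalso.
  have := pay_ge_elem pos eX; rewrite pe => h.
  have := Ha' j0; lra.
have Pa := pay_L PaL.
exists (#|X a|%:Z); change ((#|X a|%:Z)%:~R) with (#|X a|%:R : R); rewrite -Pa; split; first by apply: le_lt_trans (Ha' j0) Hj0.
split.
- move=> j; rewrite inE => /subsetP sub.
  have PjL : forall e, e \in X j -> p e = 1.
    by move=> e /sub; rewrite inE => /eqP.
  have Pj := pay_L PjL.
  have h1 := Ha' j; rewrite Pj Pa ler_nat in h1.
  case: (ef1 j a) => [Xj0|[e eX He]].
    left; apply/eqP; rewrite eq_le Ha' andbT Pj Pa ler_nat.
    by rewrite Xj0 cards0 in h1 *.
  have h2 : pay p (X j) <= pay p (X a) + 1.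
    by move: (pay_D1 p eX); rewrite (PjL e eX) => hD; lra.
  rewrite Pj Pa natr1 ler_nat in h2.
  case: (ltngtP #|X a| #|X j|) h1 h2 => [lt _ h2|gt h1 _|eq _ _].
  2: by exfalso; move: gt h1; rewrite ltnNge => /negP.
  2: by left; rewrite Pj Pa eq.
  by right; rewrite Pj Pa natr1; congr (_ %:R); apply/eqP; rewrite eqn_leq h2 lt.
- move=> i; rewrite inE card_gt0 => /set0Pn [f]; rewrite inE => /andP [fX]; rewrite inE => /eqP pf.
  have hk : k <= pay p (X i) by rewrite -pf; apply: pay_ge_elem.
  rewrite hk /=.
  case: (ef1 i a) => [Xi0|[e eX He]]; first by rewrite Xi0 inE in fX.
  move: (pay_D1 p eX) (pk e) => hD. lra.
Qed.
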